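(* For integers $a,b,c,d$ with $1\le c<a$, $0\le d<b$, and $a+b+c+d=n$, let $\lambda_{a,b,c,d} = a\,(c+1)\,2^d\,1^{b-d-1}\in P(n)$ (the partition with parts $a$, $c+1$, then $d$ parts equal to $2$, then $b-d-1$ parts equal to $1$). Then the number of standard Young tableaux of shape $\lambda_{a,b,c,d}$ is $$\chi^{\lambda_{a,b,c,d}}(1^n) = \binom{n}{a,b,c,d}\frac{ac(a-c)(b-d)}{(a+b)(a+d)(b+c)(c+d)},$$ and $$\rho_{\lambda_{a,b,c,d}} = \binom{a}{2}-\binom{b+1}{2}+\binom{c}{2}-\binom{d+1}{2},$$ where $2\rho_\lambda=\sum_i\lambda_i(\lambda_i-2i+1)$.
   Context: $\binom{n}{a,b,c,d} = \frac{n!}{a!\,b!\,c!\,d!}$ is the multinomial coefficient. *)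

(* Defs.v *)
From mathcomp Require Import all_boot all_order all_algebra.
Set Implicit Arguments. Unset Strict Implicit. Unset Printing Implicit Defensive.
Import Order.TTheory GRing.Theory Num.Theory.

(* A partition is a (weakly decreasing) sequence of positive parts [lambda_1; lambda_2; ...]. *)

Definition in_diagram (la : seq nat) (x : nat * nat) : bool := x.2 < nth 0 la x.1.

Definition cellT (la : seq nat) : finType := ('I_(size la) * 'I_(head 0 la))%type.

Definition cell_nat (la : seq nat) (x : cellT la) : nat * nat :=
  (nat_of_ord x.1, nat_of_ord x.2).

(* A standard Young tableau of shape la (with |la| = n): cells of the diagram are
   filled injectively with labels in {0,..,n-1} (hence bijectively, as the diagram
   has n cells), strictly increasing along rows and down columns; cells outside the
   diagram carry no label. *)
Definition is_syt (la : seq nat) (n : nat) (T : {ffun cellT la -> option 'I_n}) : bool :=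
  [&& [forall x, in_diagram la (cell_nat x) == isSome (T x)],
      [forall x, forall y, (in_diagram la (cell_nat x) && in_diagram la (cell_nat y)
                            && (T x == T y)) ==> (x == y)],
      [forall x, forall y, (in_diagram la (cell_nat x) && in_diagram la (cell_nat y)
          && (x.1 == y.1 :> nat) && (x.2 < y.2)) ==>
          (match T x, T y with Some u, Some v => u < v | _, _ => false end)] &
      [forall x, forall y, (in_diagram la (cell_nat x) && in_diagram la (cell_nat y)
          && (x.2 == y.2 :> nat) && (x.1 < y.1)) ==>
          (match T x, T y with Some u, Some v => u < v | _, _ => false end)]].

(* Number of standard Young tableaux of shape la (= chi^la(1^n), n = |la|). *)
Definition num_syt (la : seq nat) : nat :=
  #|[set T : {ffun cellT la -> option 'I_(sumn la)} | is_syt T]|.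

Definition lam_abcd (a b c d : nat) : seq nat :=
  [:: a; c.+1] ++ nseq d 2 ++ nseq (b - d - 1) 1.

Local Open Scope ring_scope.

Definition multinom4 (n a b c d : nat) : rat :=
  (n`!)%:R / ((a`!)%:R * (b`!)%:R * (c`!)%:R * (d`!)%:R).

Definition rho (la : seq nat) : rat :=
  (\sum_(i < size la)
     ((nth 0 la i)%:R * ((nth 0 la i)%:R - 2 * (i.+1)%:R + 1) : rat)) / 2.

(* Main.v *)
Require Import Defs.
From mathcomp Require Import all_boot all_order all_algebra.
From mathcomp Require Import zify ring lra.
From Stdlib Require Import FunctionalExtensionality.
Import Order.TTheory GRing.Theory Num.Theory.
Set Implicit Arguments. Unset Strict Implicit. Unset Printing Implicit Defensive.

Definition inD (r : nat -> nat) (x : nat * nat) : bool := x.2 < r x.1.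
Definition cn R C (x : 'I_R * 'I_C) : nat * nat := (nat_of_ord x.1, nat_of_ord x.2).
Definition ltopt m (o1 o2 : option 'I_m) : bool :=
  match o1, o2 with Some u, Some v => u < v | _, _ => false end.
Definition sytR R C (r : nat -> nat) m (T : {ffun 'I_R * 'I_C -> option 'I_m}) : bool :=
  [&& [forall x, inD r (cn x) == isSome (T x)],
      [forall x, forall y, (inD r (cn x) && inD r (cn y) && (T x == T y)) ==> (x == y)],
      [forall x, forall y, (inD r (cn x) && inD r (cn y)
          && (x.1 == y.1 :> nat) && (x.2 < y.2)) ==> ltopt (T x) (T y)] &
      [forall x, forall y, (inD r (cn x) && inD r (cn y)
          && (x.2 == y.2 :> nat) && (x.1 < y.1)) ==> ltopt (T x) (T y)]].
Definition Ncnt R C r m := #|[set T : {ffun 'I_R * 'I_C -> option 'I_m} | sytR r T]|.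

Lemma num_syt_Ncnt la :
  num_syt la = Ncnt (size la) (head 0 la) (fun i => nth 0 la i) (sumn la).
Proof. by []. Qed.

Lemma sytP R C m (r : nat -> nat) (T : {ffun 'I_R * 'I_C -> option 'I_m}) : sytR r T <->
  [/\ forall x, inD r (cn x) = isSome (T x),
      forall x y, inD r (cn x) -> inD r (cn y) -> T x = T y -> x = y,
      forall x y, inD r (cn x) -> inD r (cn y) -> x.1 = y.1 :> nat -> x.2 < y.2 ->
                  ltopt (T x) (T y) &
      forall x y, inD r (cn x) -> inD r (cn y) -> x.2 = y.2 :> nat -> x.1 < y.1 ->
                  ltopt (T x) (T y)].
Proof.
split.
- case/and4P => /forallP H1 /forallP H2 /forallP H3 /forallP H4; split.
  + by move=> x; move: (H1 x) => /eqP.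
  + move=> x y hx hy e; move: (H2 x) => /forallP /(_ y).
    by rewrite hx hy e eqxx => /implyP /(_ isT) /eqP.
  + move=> x y hx hy e l; move: (H3 x) => /forallP /(_ y).
    by rewrite hx hy e eqxx l => /implyP /(_ isT).
  + move=> x y hx hy e l; move: (H4 x) => /forallP /(_ y).
    by rewrite hx hy e eqxx l => /implyP /(_ isT).
- case=> H1 H2 H3 H4; apply/and4P; split.
  + by apply/forallP => x; rewrite H1.
  + apply/forallP => x; apply/forallP => y; apply/implyP => /andP[/andP[hx hy] /eqP e].
    by apply/eqP; exact: H2.
  + apply/forallP => x; apply/forallP => y.
    by apply/implyP => /andP[/andP[/andP[hx hy] /eqP e] l]; exact: H3.
  + apply/forallP => x; apply/forallP => y.
    by apply/implyP => /andP[/andP[/andP[hx hy] /eqP e] l]; exact: H4.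
Qed.

Lemma sum_ind (R k X : nat) : k < R -> \sum_(i < R) (if (i:nat) == k then X else 0) = X.
Proof.
move=> hk; rewrite (bigD1 (Ordinal hk)) //= eqxx big1 ?addn0 // => i /negbTE.
by rewrite -val_eqE /= => ->.
Qed.

Lemma ltopt_lift m o1 o2 :
  ltopt (omap (@lift m.+1 ord_max) o1) (omap (lift ord_max) o2) = ltopt o1 o2.
Proof. by case: o1 => [u|]; case: o2 => [v|] //; rewrite /ltopt; cbn -[lift]; rewrite !lift_max. Qed.

Lemma omap_lift_inj m o1 o2 :
  omap (@lift m.+1 ord_max) o1 = omap (lift ord_max) o2 -> o1 = o2.
Proof. by case: o1 => [u|]; case: o2 => [v|] //; cbn -[lift] => /Some_inj/lift_inj ->. Qed.

Definition Dset R C r := [set x : 'I_R * 'I_C | inD r (cn x)].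
Definition cornerb R (r : nat -> nat) (i : nat) :=
  (0 < r i) && [forall k : 'I_R, (i < k) ==> (r k < r i)].
Definition dec (r : nat -> nat) i := fun k => if k == i then (r i).-1 else r k.
Definition maxrow R C m (T : {ffun 'I_R * 'I_C -> option 'I_m.+1}) : nat :=
  if [pick x | T x == Some ord_max] is Some x then nat_of_ord x.1 else R.

Section Rec.
Variables (R C : nat) (r : nat -> nat).
Hypothesis fR : forall i, R <= i -> r i = 0.
Hypothesis fC : forall i, r i <= C.

Lemma max_exists m (T : {ffun 'I_R * 'I_C -> option 'I_m.+1}) :
  #|Dset R C r| = m.+1 -> sytR r T -> exists x, T x = Some ord_max.
Proof.
move=> hD /sytP[H1 H2 _ _].
case: (pickP (fun x => T x == Some ord_max)) => [x /eqP Tx | H0]; first by exists x.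
exfalso.
pose g x := odflt (@ord0 m) (T x).
have inj : {in Dset R C r &, injective g}.
  move=> x y; rewrite !inE => hx hy; rewrite /g.
  move: (hx) (hy); rewrite !H1.
  case Ex: (T x) => [u|] // _; case Ey: (T y) => [v|] // _ /= e.
  by apply: H2 => //; rewrite Ex Ey e.
have sub : g @: Dset R C r \subset [set~ ord_max].
  apply/subsetP => _ /imsetP[x hx ->]; rewrite !inE.
  move: hx; rewrite inE H1 /g; case Ex: (T x) => [u|] // _ /=.
  by apply/eqP => eu; move: (H0 x); rewrite Ex eu eqxx.
have := subset_leq_card sub.
by rewrite card_in_imset // cardsC1 card_ord hD ltnn.
Qed.

Lemma max_corner m (T : {ffun 'I_R * 'I_C -> option 'I_m.+1}) (x : 'I_R * 'I_C) :
  sytR r T -> T x = Some ord_max ->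
  x.2 = (r x.1).-1 :> nat /\ cornerb R r x.1.
Proof.
move=> /sytP[H1 H2 H3 H4] Tx.
have hx : inD r (cn x) by rewrite H1 Tx.
move: (hx); rewrite /inD /= => hx'.
split.
- apply/eqP; rewrite eqn_leq; apply/andP; split; first by lia.
  rewrite leqNgt; apply/negP => lt.
  have hy : (r x.1).-1 < C by have := fC x.1; lia.
  pose y := (x.1, Ordinal hy).
  have hy' : inD r (cn y) by rewrite /inD /=; lia.
  have := H3 x y hx hy' erefl lt.
  rewrite Tx /ltopt; case: (T y) => [v|] //= h.
  by have := ltn_ord v; lia.
- rewrite /cornerb; apply/andP; split; first by lia.
  apply/forallP => k; apply/implyP => ik; rewrite ltnNge; apply/negP => le.
  pose y := (k, x.2).
  have hy : inD r (cn y) by rewrite /inD /=; lia.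
  have := H4 x y hx hy erefl ik.
  rewrite Tx /ltopt; case: (T y) => [v|] //= h.
  by have := ltn_ord v; lia.
Qed.

Lemma maxrow_eq m (T : {ffun 'I_R * 'I_C -> option 'I_m.+1}) (x : 'I_R * 'I_C) :
  sytR r T -> T x = Some ord_max -> maxrow T = x.1.
Proof.
move=> hT Tx; rewrite /maxrow; case: pickP => [y /eqP Ty | H0]; last first.
  by move: (H0 x); rewrite Tx eqxx.
move/sytP: hT => [H1 H2 _ _].
have -> // : y = x.
by apply: H2; [rewrite H1 Ty | rewrite H1 Tx | rewrite Ty Tx].
Qed.

Lemma corner_lt i : cornerb R r i -> i < R.
Proof. by move=> /andP[h _]; rewrite ltnNge; apply/negP => /fR; lia. Qed.

Lemma corner_ltC i : cornerb R r i -> (r i).-1 < C.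
Proof. by move=> /andP[h _]; have := fC i; lia. Qed.


Lemma ccP i (hi : i < R) (hj : (r i).-1 < C) (x : 'I_R * 'I_C) :
  (x == (Ordinal hi, Ordinal hj)) = (x.1 == i :> nat) && (x.2 == (r i).-1 :> nat).
Proof. by case: x => x1 x2; rewrite xpair_eqE -!val_eqE. Qed.

Lemma inD_dec i (hi : i < R) (hj : (r i).-1 < C) (x : 'I_R * 'I_C) :
  0 < r i ->
  inD (dec r i) (cn x) = inD r (cn x) && (x != (Ordinal hi, Ordinal hj)).
Proof.
move=> ri; rewrite ccP /inD /dec /=.
case: (eqVneq (nat_of_ord x.1) i) => [e|ne] /=; last by rewrite andbT.
rewrite e; apply/idP/andP => [h|[h1 h2]]; first by split; lia.
by move: h2 => /eqP h2; lia.
Qed.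

Lemma Dset_dec m i : #|Dset R C r| = m.+1 -> cornerb R r i -> #|Dset R C (dec r i)| = m.
Proof.
move=> hD ci.
have hi := corner_lt ci; have hj := corner_ltC ci.
have ri : 0 < r i by case/andP: ci.
have -> : Dset R C (dec r i) = Dset R C r :\ (Ordinal hi, Ordinal hj).
  by apply/setP => x; rewrite !inE inD_dec // andbC.
have hc : (Ordinal hi, Ordinal hj) \in Dset R C r by rewrite inE /inD /=; lia.
by move: hD; rewrite (cardsD1 (Ordinal hi, Ordinal hj)) hc; case.
Qed.

Lemma slice m i : #|Dset R C r| = m.+1 ->
  #|[set T in [set T : {ffun 'I_R * 'I_C -> option 'I_m.+1} | sytR r T] | maxrow T == i]| =
  if cornerb R r i then Ncnt R C (dec r i) m else 0.
Proof.
move=> hD.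
case: (boolP (cornerb R r i)) => ci; last first.
  apply/eqP; rewrite cards_eq0; apply/eqP/setP => T; rewrite !inE.
  apply/negbTE/negP => /andP[hT /eqP hm].
  have [x Tx] := max_exists hD hT.
  have [_ cx] := max_corner hT Tx.
  by rewrite -(maxrow_eq hT Tx) hm (negbTE ci) in cx.
have hi := corner_lt ci; have hj := corner_ltC ci.
have ri : 0 < r i by case/andP: ci.
set cc : 'I_R * 'I_C := (Ordinal hi, Ordinal hj).
have inDcc : inD r (cn cc) by rewrite /inD /=; lia.
have inDd x : inD (dec r i) (cn x) = inD r (cn x) && (x != cc) by exact: inD_dec.
pose psi (T' : {ffun 'I_R * 'I_C -> option 'I_m}) : {ffun 'I_R * 'I_C -> option 'I_m.+1} :=
  [ffun x => if x == cc then Some ord_max else omap (lift ord_max) (T' x)].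
pose phi (T : {ffun 'I_R * 'I_C -> option 'I_m.+1}) : {ffun 'I_R * 'I_C -> option 'I_m} :=
  [ffun x => if x == cc then None else obind (unlift ord_max) (T x)].
have psiE (T' : {ffun 'I_R * 'I_C -> option 'I_m}) (x : 'I_R * 'I_C) : psi T' x = if x == cc then Some ord_max else omap (lift ord_max) (T' x).
  by rewrite ffunE.
have T'cc (T' : {ffun 'I_R * 'I_C -> option 'I_m}) : sytR (dec r i) T' -> T' cc = None.
  move=> /sytP[G1 _ _ _]; have := G1 cc; rewrite inDd eqxx andbF.
  by case: (T' cc).
rewrite /Ncnt -(card_in_imset (f := psi)); last first.
  move=> T1 T2; rewrite !inE => h1 h2 e; apply/ffunP => x.
  have := congr1 (fun f : {ffun 'I_R * 'I_C -> option 'I_m.+1} => f x) e; rewrite /= !psiE.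
  case: eqVneq => [->|hx] /=; first by rewrite !T'cc.
  exact: omap_lift_inj.
apply: eq_card => T; rewrite !inE; apply/andP/imsetP.
- move=> [hT /eqP hm].
  have [x Tx] := max_exists hD hT.
  have [x2 _] := max_corner hT Tx.
  have xcc : x = cc.
    apply/eqP; rewrite ccP -hm (maxrow_eq hT Tx) eqxx /=; exact/eqP.
  subst x.
  move/sytP: (hT) => [H1 H2 H3 H4].
  have Td x : x != cc -> T x = omap (lift ord_max) (phi T x).
    move=> hx; rewrite ffunE (negbTE hx).
    case Ex: (T x) => [u|] //=.
    case: unliftP => [u' ->|eu] //=.
    have xc : x = cc by apply: H2; [rewrite H1 Ex | rewrite H1 Tx | rewrite Ex Tx eu].
    by rewrite xc eqxx in hx.
  exists (phi T).
    rewrite inE; apply/sytP; split.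
    + move=> x; rewrite inDd; case: (eqVneq x cc) => [->|hx].
        by rewrite andbF ffunE eqxx.
      by rewrite andbT H1 (Td x hx); case: (phi T x).
    + move=> x y; rewrite !inDd => /andP[hx hxc] /andP[hy hyc] e.
      by apply: H2 => //; rewrite !Td // e.
    + move=> x y; rewrite !inDd => /andP[hx hxc] /andP[hy hyc] e l.
      by have := H3 x y hx hy e l; rewrite !Td // ltopt_lift.
    + move=> x y; rewrite !inDd => /andP[hx hxc] /andP[hy hyc] e l.
      by have := H4 x y hx hy e l; rewrite !Td // ltopt_lift.
  apply/ffunP => x; rewrite psiE; case: (eqVneq x cc) => [->|hx]; first by [].
  exact: Td.
- move=> [T' hT' ->]; move: hT'; rewrite inE => hT'.
  have T'c := T'cc _ hT'.
  move/sytP: (hT') => [G1 G2 G3 G4].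
  have hsome x : x != cc -> inD r (cn x) -> exists u, T' x = Some u.
    move=> hx h; have := G1 x; rewrite inDd hx h.
    by case: (T' x) => [u|] // _; exists u.
  have hpsi : sytR r (psi T').
    apply/sytP; split.
    + move=> x; rewrite psiE; case: (eqVneq x cc) => [->|hx]; first by rewrite inDcc.
      by have := G1 x; rewrite inDd hx andbT => ->; case: (T' x).
    + move=> x y hx hy; rewrite !psiE.
      case: (eqVneq x cc) => [->|hxc]; case: (eqVneq y cc) => [->|hyc] //.
      * have [v ->] := hsome y hyc hy.
        by move=> /= /Some_inj /eqP; rewrite (negbTE (neq_lift _ _)).
      * have [u ->] := hsome x hxc hx.
        by move=> /= /Some_inj /eqP; rewrite eq_sym (negbTE (neq_lift _ _)).
      * move/omap_lift_inj => e; apply: G2 => //; by rewrite inDd ?hx ?hy ?hxc ?hyc.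
    + move=> x y hx hy e l; rewrite !psiE.
      case: (eqVneq x cc) => [exc|hxc]; case: (eqVneq y cc) => [eyc|hyc].
      * by subst; rewrite ltnn in l.
      * subst x; move: e l hy; rewrite /inD /= => e l hy; rewrite -e in hy; lia.
      * have [u ->] := hsome x hxc hx.
        by rewrite /ltopt; cbn -[lift]; rewrite lift_max; exact: ltn_ord.
      * by have := G3 x y; rewrite !inDd hx hy hxc hyc ltopt_lift; apply.
    + move=> x y hx hy e l; rewrite !psiE.
      case: (eqVneq x cc) => [exc|hxc]; case: (eqVneq y cc) => [eyc|hyc].
      * by subst; rewrite ltnn in l.
      * subst x; move: e l hy; rewrite /inD /= => e l hy.
        move/andP: ci => [_ /forallP /(_ y.1)]; rewrite l /= => h; lia.
      * have [u ->] := hsome x hxc hx.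
        by rewrite /ltopt; cbn -[lift]; rewrite lift_max; exact: ltn_ord.
      * by have := G4 x y; rewrite !inDd hx hy hxc hyc ltopt_lift; apply.
  split; first exact: hpsi.
  by rewrite (maxrow_eq (x := cc) hpsi) ?psiE ?eqxx.
Qed.

Lemma rec m : #|Dset R C r| = m.+1 ->
  Ncnt R C r m.+1 = \sum_(i < R) (if cornerb R r i then Ncnt R C (dec r i) m else 0).
Proof.
move=> hD.
rewrite -(eq_bigr _ (fun (i : 'I_R) _ => slice i hD)).
set A := [set T : {ffun 'I_R * 'I_C -> option 'I_m.+1} | sytR r T].
rewrite /Ncnt -/A -sum1_card.
transitivity (\sum_(T in A) \sum_(i < R) (if (i : nat) == maxrow T then 1 else 0)).
  apply: eq_bigr => T; rewrite inE => hT.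
  have [x Tx] := max_exists hD hT.
  by rewrite sum_ind // (maxrow_eq hT Tx).
rewrite exchange_big /=; apply: eq_bigr => i _.
rewrite -big_mkcondr /= sum1dep_card; apply: eq_card => T; rewrite !inE eq_sym.
by [].
Qed.

End Rec.

Lemma cornerT R (r : nat -> nat) i :
  0 < r i -> (forall k, i < k -> r k < r i) -> cornerb R r i.
Proof.
move=> h H; apply/andP; split=> //; apply/forallP => k; apply/implyP; exact: H.
Qed.

Lemma cornerF R (r : nat -> nat) i k :
  k < R -> i < k -> r i <= r k -> cornerb R r i = false.
Proof.
move=> kR ik le; apply/negbTE/negP => /andP[_ /forallP /(_ (Ordinal kR))].
by rewrite /= ik /=; lia.
Qed.

Lemma cornerF0 R (r : nat -> nat) i : r i = 0 -> cornerb R r i = false.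
Proof. by rewrite /cornerb => ->. Qed.

Lemma Dset_zero R C (r : nat -> nat) : (forall i, r i = 0) -> #|Dset R C r| = 0.
Proof.
move=> h; apply/eqP; rewrite cards_eq0; apply/eqP/setP => x.
by rewrite !inE /inD h.
Qed.

Lemma Dset_pos R C (r : nat -> nat) i : i < R -> 0 < r i -> r i <= C -> 0 < #|Dset R C r|.
Proof.
move=> iR ri rC; have h0 : 0 < C by lia.
apply/card_gt0P; exists (Ordinal iR, Ordinal h0); by rewrite inE /inD /=.
Qed.

Lemma Ncnt_zero R C (r : nat -> nat) : (forall i, r i = 0) -> Ncnt R C r 0 = 1.
Proof.
move=> h; rewrite /Ncnt.
have none (T : {ffun 'I_R * 'I_C -> option 'I_0}) x : T x = None.
  by case: (T x) => // -[u hu].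
rewrite (_ : [set T | _] = [set [ffun => None]]) ?cards1 //.
apply/setP => T; rewrite !inE.
have -> : T == [ffun => None] by apply/eqP/ffunP => x; rewrite ffunE none.
apply/sytP; split.
- by move=> x; rewrite /inD h none.
- by move=> x y; rewrite /inD h.
- by move=> x y; rewrite /inD h.
- by move=> x y; rewrite /inD h.
Qed.

Definition Hk a b := fun i : nat => if i == 0 then a else if i <= b then 1 else 0.

Definition Sh a b c d := fun i : nat =>
  if i == 0 then a else if i == 1 then c.+1 else if i <= d.+1 then 2 else if i <= b then 1 else 0.

Ltac shp := unfold dec, Hk, Sh; rewrite /=; repeat (case: ifP => /=); move=> *; lia.

Lemma hook_cnt R C : forall m a b : nat, (0 < a) || (b == 0) -> b < R -> a <= C ->
  #|Dset R C (Hk a b)| = m -> Ncnt R C (Hk a b) m = 'C(a + b - 1, b).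
Proof.
elim=> [|m IH] a b hab hbR haC hD.
  case: (posnP a) => [a0|apos].
    have b0 : b = 0 by move: hab; rewrite a0 /=; move/eqP.
    subst; rewrite Ncnt_zero // => i; shp.
  have := Dset_pos (r := Hk a b) (C := C) (i := 0) (leq_ltn_trans (leq0n b) hbR).
  by rewrite hD /Hk /=; lia.
have apos : 0 < a.
  case: (posnP a) => [a0|//]; have b0 : b = 0 by move: hab; rewrite a0 /=; move/eqP.
  by move: hD; rewrite Dset_zero // => i; subst; shp.
have fR : forall i, R <= i -> Hk a b i = 0 by move=> i hi; shp.
have fC : forall i, Hk a b i <= C by move=> i; shp.
rewrite (rec fR fC hD).
transitivity (\sum_(i < R) ((if (i:nat) == 0 then
      (if (1 < a) || (b == 0) then 'C(a.-1 + b - 1, b) else 0) else 0) +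
    (if (i:nat) == b then (if 0 < b then 'C(a + b.-1 - 1, b.-1) else 0) else 0))).
  apply: eq_bigr => i _.
  case: (eqVneq (i:nat) 0) => [i0|in0].
    have -> : (if (i:nat) == b then (if 0 < b then 'C(a + b.-1 - 1, b.-1) else 0) else 0) = 0.
      by rewrite i0; case: b {hab hbR hD fR fC}.
    rewrite addn0 i0; case: (boolP ((1 < a) || (b == 0))) => h.
      have h' : 1 < a \/ b = 0 by case/orP: h => [|/eqP]; auto.
      have c0 : cornerb R (Hk a b) 0 by apply: cornerT => [|k hk]; shp.
      rewrite c0.
      have -> : dec (Hk a b) 0 = Hk a.-1 b.
        by apply: functional_extensionality => k; shp.
      apply: IH => //; first by lia.
        by lia.
      by rewrite -(Dset_dec fR fC hD c0); congr #|Dset _ _ _|; apply: functional_extensionality => k; shp.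
    have h' : a <= 1 /\ 0 < b by move: h; rewrite negb_or => /andP[]; lia.
    have b1 : 1 < R by lia.
    by rewrite (cornerF (k := 1)) //; shp.
  rewrite add0n.
  case: (eqVneq (i:nat) b) => [ib|inb].
    have bpos : 0 < b by lia.
    have ci : cornerb R (Hk a b) i by apply: cornerT => [|k hk]; shp.
    rewrite ci bpos.
    have -> : dec (Hk a b) i = Hk a b.-1.
      by apply: functional_extensionality => k; shp.
    apply: IH => //; first by lia.
      by lia.
    by rewrite -(Dset_dec fR fC hD ci); congr #|Dset _ _ _|; apply: functional_extensionality => k; shp.
  case: (ltnP i b) => ib.
    have b1 : i.+1 < R by lia.
    by rewrite (cornerF (k := i.+1)) //; shp.
  by rewrite cornerF0 //; shp.
rewrite big_split /= !sum_ind //; last by lia.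
case: (posnP b) => [b0|bpos].
  by subst; rewrite orbT /= !addn0 !bin0.
rewrite orbF.
case: (ltnP 1 a) => ha /=.
  have e1 : a.-1 + b - 1 = (a + b - 3).+1 by lia.
  have e2 : a + b.-1 - 1 = (a + b - 3).+1 by lia.
  have e3 : a + b - 1 = (a + b - 3).+2 by lia.
  have e4 : b = b.-1.+1 by lia.
  rewrite e1 e2 e3; move: (a + b - 3) => n.
  by rewrite e4 /= [RHS]binS.
have a1 : a = 1 by lia.
subst; rewrite add0n.
have -> : 1 + b - 1 = b by lia.
have -> : 1 + b.-1 - 1 = b.-1 by lia.
by rewrite !binn.
Qed.

Section ShapeFacts.
Variables (R a b c d : nat).

Lemma Sh_fR : d < b -> b < R -> (forall i, R <= i -> Sh a b c d i = 0).
Proof. move=> *; shp. Qed.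
Lemma Sh_fC C : a <= C -> c < a -> 0 < c -> (forall i, Sh a b c d i <= C).
Proof. move=> *; shp. Qed.

Lemma S1 : 0 < c -> c.+1 < a -> cornerb R (Sh a b c d) 0.
Proof. by move=> h0 h; apply: cornerT => [|k hk]; shp. Qed.
Lemma S1e : dec (Sh a b c d) 0 = Sh a.-1 b c d.
Proof. by apply: functional_extensionality => k; shp. Qed.
Lemma S1f : a <= c.+1 -> 1 < R -> cornerb R (Sh a b c d) 0 = false.
Proof. by move=> h hR; rewrite (cornerF (k := 1)) //; shp. Qed.

Lemma S2 : 1 < c -> cornerb R (Sh a b c d) 1.
Proof. by move=> h; apply: cornerT => [|k hk]; shp. Qed.
Lemma S2e : 0 < c -> dec (Sh a b c d) 1 = Sh a b c.-1 d.
Proof. by move=> h; apply: functional_extensionality => k; shp. Qed.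
Lemma S3 : 0 < c -> d = 0 -> cornerb R (Sh a b c d) 1.
Proof. by move=> h0 h; apply: cornerT => [|k hk]; shp. Qed.
Lemma S3e : c = 1 -> d = 0 -> d < b -> dec (Sh a b c d) 1 = Hk a b.
Proof. by move=> h1 h2 h3; apply: functional_extensionality => k; shp. Qed.
Lemma S3f : c = 1 -> 0 < d -> 2 < R -> cornerb R (Sh a b c d) 1 = false.
Proof. by move=> h1 h2 hR; rewrite (cornerF (k := 2)) //; shp. Qed.

Lemma S4 : 0 < d -> cornerb R (Sh a b c d) d.+1.
Proof. by move=> h; apply: cornerT => [|k hk]; shp. Qed.
Lemma S4e : 0 < d -> d < b -> dec (Sh a b c d) d.+1 = Sh a b c d.-1.
Proof. by move=> h h'; apply: functional_extensionality => k; shp. Qed.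

Lemma S5 : d.+1 < b -> cornerb R (Sh a b c d) b.
Proof. by move=> h; apply: cornerT => [|k hk]; shp. Qed.
Lemma S5e : d.+1 < b -> dec (Sh a b c d) b = Sh a b.-1 c d.
Proof. by move=> h; apply: functional_extensionality => k; shp. Qed.

Lemma S6 i : i != 0 -> i != 1 -> i != d.+1 -> i < b -> b < R -> cornerb R (Sh a b c d) i = false.
Proof. by move=> h0 h1 h2 h3 hR; rewrite (cornerF (k := i.+1)) //; try lia; shp. Qed.
Lemma S7 i : b < i -> d < b -> cornerb R (Sh a b c d) i = false.
Proof. by move=> h hb; rewrite cornerF0 //; shp. Qed.
End ShapeFacts.

Local Open Scope ring_scope.

Definition Fv (a b c d : nat) : rat :=
  multinom4 (a + b + c + d) a b c d *
    ((a * c * (a - c) * (b - d))%N%:R /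
     ((a + b)%N%:R * (a + d)%N%:R * (b + c)%N%:R * (c + d)%N%:R)).

Lemma sum_indR R k (P : bool) (X : rat) : (k < R)%N ->
  \sum_(i < R) (if ((i:nat) == k) && P then X else 0) = if P then X else 0.
Proof.
move=> hk; rewrite (bigD1 (Ordinal hk)) //= eqxx /= big1 ?addr0 // => i /negbTE.
by rewrite -val_eqE /= => ->.
Qed.

Lemma FvR a b c d : (c <= a)%N -> (d <= b)%N -> Fv a b c d =
  (a + b + c + d)`!%:R / (a`!%:R * b`!%:R * c`!%:R * d`!%:R) *
  (a%:R * c%:R * (a%:R - c%:R) * (b%:R - d%:R) /
     ((a%:R + b%:R) * (a%:R + d%:R) * (b%:R + c%:R) * (c%:R + d%:R))).
Proof. by move=> h1 h2; rewrite /Fv /multinom4 !natrM !natrD !natrB. Qed.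

Lemma Fv0 a b c d : (a * c * (a - c) * (b - d))%N = 0%N -> Fv a b c d = 0.
Proof. by move=> h; rewrite /Fv h mul0r mulr0. Qed.

Lemma binR n k : (k <= n)%N ->
  ('C(n, k))%:R = n`!%:R / (k`!%:R * (n - k)`!%:R) :> rat.
Proof.
move=> h; rewrite -(bin_fact h) !natrM; field.
by rewrite !pnatr_eq0 -!lt0n !fact_gt0.
Qed.

Ltac sidec := rewrite ?pnatr_eq0 -?lt0n ?fact_gt0 /=;
  repeat (apply/andP; split); first [apply: lt0r_neq0; lra | lia].

Lemma alg a b c d : (0 < c)%N -> (c < a)%N -> (d < b)%N ->
  Fv a b c d = (if (c.+1 < a)%N then Fv a.-1 b c d else 0)
    + (if (1 < c)%N then Fv a b c.-1 d else 0)
    + (if (c == 1%N) && (d == 0%N) then ('C(a + b - 1, b))%:R else 0)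
    + (if (0 < d)%N then Fv a b c d.-1 else 0)
    + (if (d.+1 < b)%N then Fv a b.-1 c d else 0).
Proof.
move=> c0 ca db.
have -> : (if (c.+1 < a)%N then Fv a.-1 b c d else 0) = Fv a.-1 b c d.
  case: (ltnP c.+1 a) => h //; rewrite Fv0 //.
  have -> : (a.-1 - c = 0)%N by lia.
  by rewrite muln0 mul0n.
have -> : (if (1 < c)%N then Fv a b c.-1 d else 0) = Fv a b c.-1 d.
  case: (ltnP 1 c) => h //; rewrite Fv0 //.
  have -> : (c.-1 = 0)%N by lia.
  by rewrite muln0 !mul0n.
have -> : (if (d.+1 < b)%N then Fv a b.-1 c d else 0) = Fv a b.-1 c d.
  case: (ltnP d.+1 b) => h //; rewrite Fv0 //.
  have -> : (b.-1 - d = 0)%N by lia.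
  by rewrite muln0.
have [a1 ea] : exists a1, a = a1.+1 by exists a.-1; lia.
have [b1 eb] : exists b1, b = b1.+1 by exists b.-1; lia.
have [c1 ec] : exists c1, c = c1.+1 by exists c.-1; lia.
subst a b c => /=.
have ha := ler0n rat a1. have hb := ler0n rat b1. have hc := ler0n rat c1.
case: d db => [|d1] db /=.
  rewrite addr0 /=.
  case: c1 c0 ca hc => [|c2] c0 ca hc /=.
    rewrite (@Fv0 a1.+1 b1.+1 0 0) ?muln0 ?mul0n // ?add0r ?addr0.
    rewrite binR; last by lia.
    have -> : (a1.+1 + b1.+1 - 1 - b1.+1 = a1)%N by lia.
    have -> : (a1.+1 + b1.+1 - 1 = (a1 + b1).+1)%N by lia.
    rewrite !FvR; try lia.
    rewrite !(addSn, addnS, addn0) !factS !natrM -!nat1r !natrD.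
    field.
    sidec.
  rewrite addr0.
  have hc2 := ler0n rat c2.
  rewrite !FvR; try lia.
  rewrite !(addSn, addnS, addn0) !factS !natrM -!nat1r !natrD.
  field.
  sidec.
rewrite (_ : (d1.+1 == 0%N) = false) // andbF addr0.
have hd := ler0n rat d1.
rewrite !FvR; try lia.
rewrite !(addSn, addnS, addn0) !factS !natrM -!nat1r !natrD.
field.
sidec.
Qed.

Ltac cf x := have -> : x = false by rewrite /x; lia.

Lemma sh_cnt R C : forall m a b c d : nat, (0 < c)%N -> (c < a)%N -> (d < b)%N ->
  (b < R)%N -> (a <= C)%N ->
  #|Dset R C (Sh a b c d)| = m -> (Ncnt R C (Sh a b c d) m)%:R = Fv a b c d.
Proof.
elim=> [|m IH] a b c d c0 ca db bR aC hD.
  have := Dset_pos (r := Sh a b c d) (C := C) (i := 0) (leq_ltn_trans (leq0n b) bR).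
  by rewrite hD /Sh /=; lia.
have fR : forall i, (R <= i)%N -> Sh a b c d i = 0%N by apply: Sh_fR.
have fC : forall i, (Sh a b c d i <= C)%N by apply: Sh_fC.
have dcard i : cornerb R (Sh a b c d) i -> #|Dset R C (dec (Sh a b c d) i)| = m.
  by move=> ci; apply: (Dset_dec fR fC hD ci).
rewrite (rec fR fC hD) natr_sum.
transitivity (\sum_(i < R)
   ((if ((i:nat) == 0%N) && (c.+1 < a)%N then Fv a.-1 b c d else 0)
  + (if ((i:nat) == 1%N) && (1 < c)%N then Fv a b c.-1 d else 0)
  + (if ((i:nat) == 1%N) && ((c == 1%N) && (d == 0%N)) then ('C(a + b - 1, b))%:R else 0)
  + (if ((i:nat) == d.+1) && (0 < d)%N then Fv a b c d.-1 else 0)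
  + (if ((i:nat) == b) && (d.+1 < b)%N then Fv a b.-1 c d else 0))); last first.
  by rewrite !big_split /= !sum_indR -?alg //; lia.
apply: eq_bigr => i _.
set c1 := ((i:nat) == 0%N) && (c.+1 < a)%N.
set c2 := ((i:nat) == 1%N) && (1 < c)%N.
set c3 := ((i:nat) == 1%N) && ((c == 1%N) && (d == 0%N)).
set c4 := ((i:nat) == d.+1) && (0 < d)%N.
set c5 := ((i:nat) == b) && (d.+1 < b)%N.
have R1 : (1 < R)%N by lia.
case: (eqVneq (i:nat) 0%N) => [i0|in0].
  cf c2; cf c3; cf c4; cf c5; rewrite !addr0 i0.
  case: (ltnP c.+1 a) => h.
    have -> : c1 = true by rewrite /c1; lia.
    have ci : cornerb R (Sh a b c d) 0 by apply: S1.
    rewrite ci S1e; apply: IH => //; try lia.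
    by rewrite -S1e; apply: dcard.
  cf c1.
  by rewrite S1f.
case: (eqVneq (i:nat) 1%N) => [i1|in1].
  cf c1; cf c4; cf c5; rewrite i1.
  case: (ltnP 1 c) => h.
    cf c3; have -> : c2 = true by rewrite /c2; lia.
    rewrite add0r !addr0.
    have ci : cornerb R (Sh a b c d) 1 by apply: S2.
    rewrite ci S2e //; apply: IH => //; try lia.
    by rewrite -S2e //; apply: dcard.
  have c1' : c = 1%N by lia.
  cf c2; rewrite add0r !addr0.
  case: (eqVneq d 0%N) => [d0|dn0].
    have -> : c3 = true by rewrite /c3; lia.
    have ci : cornerb R (Sh a b c d) 1 by apply: S3.
    rewrite ci S3e // hook_cnt //; try lia.
    have E : dec (Sh a b c d) 1 = Hk a b by apply: S3e.
    by rewrite -E; apply: dcard.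
  cf c3.
  by rewrite S3f //; lia.
case: (eqVneq (i:nat) d.+1) => [id|ind].
  cf c1; cf c2; cf c3; cf c5.
  have dpos : (0 < d)%N by lia.
  have -> : c4 = true by rewrite /c4; lia.
  rewrite !add0r addr0 id.
  have ci : cornerb R (Sh a b c d) d.+1 by apply: S4.
  rewrite ci S4e //; apply: IH => //; try lia.
  by rewrite -S4e //; apply: dcard.
case: (eqVneq (i:nat) b) => [ib|inb].
  cf c1; cf c2; cf c3; cf c4.
  have db' : (d.+1 < b)%N by lia.
  have -> : c5 = true by rewrite /c5; lia.
  rewrite !add0r ib.
  have ci : cornerb R (Sh a b c d) b by apply: S5.
  rewrite ci S5e //; apply: IH => //; try lia.
  by rewrite -S5e //; apply: dcard.
cf c1; cf c2; cf c3; cf c4; cf c5; rewrite !addr0.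
case: (ltnP i b) => ib.
  by rewrite S6.
by rewrite S7 //; lia.
Qed.

Lemma sumlt C k : (\sum_(j < C) (j < k) = minn C k)%N.
Proof.
elim: C => [|C IH]; first by rewrite big_ord0 min0n.
by rewrite big_ord_recr /= IH; lia.
Qed.

Lemma card_Dset R C (r : nat -> nat) : (forall i, (r i <= C)%N) ->
  #|Dset R C r| = (\sum_(i < R) r i)%N.
Proof.
move=> hC.
transitivity (\sum_(i < R) \sum_(j < C | (j < r i)%N) 1)%N; last first.
  apply: eq_bigr => i _; rewrite big_mkcond /=.
  rewrite (eq_bigr (fun j : 'I_C => nat_of_bool (j < r i)%N)); last by move=> j _; case: ifP.
  by rewrite sumlt; have := hC i; lia.
rewrite pair_big_dep /= sum1dep_card; apply: eq_card => p; by rewrite !inE.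
Qed.

Lemma sum_nth (s : seq nat) : (\sum_(i < size s) nth 0 s i)%N = sumn s.
Proof.
elim: s => [|x s IH]; first by rewrite big_ord0.
by rewrite /= big_ord_recl /= IH.
Qed.

Definition rhoS (k : nat) (s : seq nat) : rat :=
  \sum_(i < size s) ((nth 0 s i)%:R * ((nth 0 s i)%:R - 2 * ((k + i).+1)%:R + 1)).

Lemma rhoS_cons k x s : rhoS k (x :: s) =
  x%:R * (x%:R - 2 * (k.+1)%:R + 1) + rhoS k.+1 s.
Proof.
rewrite /rhoS /= big_ord_recl /= addn0; congr (_ + _).
by apply: eq_bigr => i _; rewrite /= addSnnS.
Qed.

Lemma rhoS_nil k : rhoS k [::] = 0.
Proof. by rewrite /rhoS big_ord0. Qed.

Lemma rhoS_cat k s1 s2 : rhoS k (s1 ++ s2) = rhoS k s1 + rhoS (k + size s1) s2.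
Proof.
elim: s1 k => [|x s1 IH] k /=; first by rewrite rhoS_nil add0r addn0.
by rewrite !rhoS_cons IH addrA addSnnS.
Qed.

Lemma rhoS_nseq k n x : rhoS k (nseq n x) =
  n%:R * x%:R * (x%:R + 1) - 2 * x%:R * k%:R * n%:R - x%:R * n%:R * (n%:R + 1).
Proof.
elim: n k => [|n IH] k /=; first by rewrite rhoS_nil !mulr0 !mul0r subr0.
rewrite rhoS_cons IH -!nat1r; ring.
Qed.

Lemma bin2R n : ('C(n, 2))%:R = n%:R * (n%:R - 1) / 2 :> rat.
Proof.
elim: n => [|n IH]; first by rewrite bin0n /= !(mulr0n, mul0r).
by rewrite binS bin1 natrD IH -nat1r; field.
Qed.

Theorem mainTheorem14 (a b c d n : nat) :
  (1 <= c)%N -> (c < a)%N -> (d < b)%N -> (a + b + c + d)%N = n ->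
  (num_syt (lam_abcd a b c d))%:R =
    multinom4 n a b c d *
    ((a * c * (a - c) * (b - d))%N%:R /
     ((a + b)%N%:R * (a + d)%N%:R * (b + c)%N%:R * (c + d)%N%:R))
  /\
  rho (lam_abcd a b c d) =
    ('C(a, 2))%:R - ('C(b.+1, 2))%:R + ('C(c, 2))%:R - ('C(d.+1, 2))%:R.
Proof.
move=> c0 ca db hn; split.
  subst n.
  rewrite num_syt_Ncnt.
  set la := lam_abcd a b c d.
  have Hf : (fun i => nth 0 la i) = Sh a b c d.
    apply: functional_extensionality => i.
    rewrite /la /lam_abcd.
    case: i => [|[|k]] //=.
    rewrite nth_cat size_nseq !nth_nseq.
    unfold Sh; rewrite /=; repeat (case: ifP => /=); move=> *; lia.
  have hs : size la = b.+1 by rewrite /la /lam_abcd /= size_cat !size_nseq; lia.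
  have hh : head 0 la = a by [].
  have hsum : sumn la = (a + b + c + d)%N.
    by rewrite /la /lam_abcd /= sumn_cat !sumn_nseq; lia.
  have hD : #|Dset (size la) (head 0 la) (fun i => nth 0 la i)| = sumn la.
    rewrite card_Dset ?sum_nth // => i.
    have -> : nth 0 la i = Sh a b c d i by rewrite -Hf.
    by rewrite hh; apply: Sh_fC.
  rewrite Hf in hD *.
  have bR : (b < size la)%N by rewrite hs.
  have aC : (a <= head 0 la)%N by rewrite hh.
  exact: (@sh_cnt _ _ _ _ _ _ _ c0 ca db bR aC hD).
rewrite /rho.
have -> : \sum_(i < size (lam_abcd a b c d))
     ((nth 0 (lam_abcd a b c d) i)%:R * ((nth 0 (lam_abcd a b c d) i)%:R - 2 * (i.+1)%:R + 1))
   = rhoS 0 (lam_abcd a b c d) by [].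
rewrite /lam_abcd /= !rhoS_cons rhoS_cat !rhoS_nseq size_nseq !bin2R.
have eb : b = ((b - d - 1) + d + 1)%N by lia.
move: (b - d - 1)%N eb => e ->.
rewrite -!nat1r !natrD; ring.
Qed.
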